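(* There is a constant $C>0$ such that for every $\phi\in\mathbb{R}$ and all distinct integers $n_1,n_2$, the arcs $I_{n_1,\phi}$ and $I_{n_2,\phi}$ of $\mathbb{R}/\mathbb{Z}$ satisfy $$d(I_{n_1,\phi},I_{n_2,\phi})>C\min(|I_{n_1,\phi}|,|I_{n_2,\phi}|).$$
   Context: $\tau=\frac{1+\sqrt5}{2}$; $w(x)=\frac1\pi\left(\tan^{-1}(x+1)-\tan^{-1}(x)\right)$. For real $x$, $x\bmod\tau\in\mathbb{R}/\tau\mathbb{Z}$ and $x\bmod1\in\mathbb{R}/\mathbb{Z}$ denote images. For $n\in\mathbb{Z}$ and $\phi\in\mathbb{R}$ let $a_{n,\phi}=\sum w(k-\phi)$, the sum over all integers $k$ with $k\bmod\tau$ in the half-open arc $[0,n\bmod\tau)$ of $\mathbb{R}/\tau\mathbb{Z}$ (from $0$ to $n\bmod\tau$ in the positive direction), and let $I_{n,\phi}\subset\mathbb{R}/\mathbb{Z}$ be the open arc from $a_{n,\phi}\bmod1$ to $(a_{n,\phi}+w(n-\phi))\bmod1$, of length $|I_{n,\phi}|=w(n-\phi)$. Here $d$ denotes the distance between subsets of the circle $\mathbb{R}/\mathbb{Z}$ (infimum of arc-length distances between their points). The constant $C$ is independent of all variables. *)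

(* Defs.v *)
From Stdlib Require Import Reals Lra ZArith.
From Coquelicot Require Import Coquelicot.
Open Scope R_scope.

Definition tau : R := (1 + sqrt 5) / 2.

Definition w (x : R) : R := (atan (x + 1) - atan x) / PI.

(* floor of a real (Int_part x = up x - 1 = floor x) *)
Definition rfloor (x : R) : Z := Int_part x.

Definition modtau (x : R) : R := x - tau * IZR (rfloor (x / tau)).

(* summand of a_{n,phi} at integer k: nonzero iff k mod tau lies in the
   half-open arc [0, n mod tau) of R/tau Z (both reps taken in [0,tau)) *)
Definition a_term (n : Z) (phi : R) (k : Z) : R :=
  if Rlt_dec (modtau (IZR k)) (modtau (IZR n)) then w (IZR k - phi) else 0.

(* a_{n,phi} = sum over all integers k (split into k >= 0 and k < 0) of the
   terms with k mod tau in [0, n mod tau); terms are positive and summable *)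
Definition a_coef (n : Z) (phi : R) : R :=
  Series (fun m : nat => a_term n phi (Z.of_nat m))
  + Series (fun m : nat => a_term n phi (- (Z.of_nat m + 1))%Z).

Definition arc_len (n : Z) (phi : R) : R := w (IZR n - phi).

Definition frac_part (t : R) : R := t - IZR (rfloor t).
Definition circ_dist (x y : R) : R :=
  Rmin (frac_part (x - y)) (1 - frac_part (x - y)).

(* I_{n,phi}: open arc from a mod 1 to (a + |I|) mod 1; a real x represents a
   point of I_{n,phi} iff x = t mod 1 for some t in (a, a + |I|) *)
Definition in_I (n : Z) (phi : R) (x : R) : Prop :=
  exists t : R, a_coef n phi < t < a_coef n phi + arc_len n phi /\
                exists m : Z, x = t + IZR m.

Definition set_dist (A B : R -> Prop) : Rbar :=
  Glb_Rbar (fun d => exists x y, A x /\ B y /\ d = circ_dist x y).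

(* Main.v *)
Require Import Defs.
From Stdlib Require Import Reals ZArith Lra Lia.
From Coquelicot Require Import Coquelicot.
Open Scope R_scope.

Lemma is_series_lim (a : nat -> R) l : is_series a l -> is_lim_seq (sum_n a) l.
Proof. intro H. exact H. Qed.

Lemma lim_is_series (a : nat -> R) l : is_lim_seq (sum_n a) (Finite l) -> is_series a l.
Proof. intro H. exact H. Qed.

Lemma sum_n_mono (a : nat -> R) : (forall n, 0 <= a n) -> forall n, sum_n a n <= sum_n a (S n).
Proof. intros H n. rewrite sum_Sn. unfold plus; simpl. specialize (H (S n)). lra. Qed.

Lemma series_bounded (a : nat -> R) B : (forall n, 0 <= a n) -> (forall n, sum_n a n <= B) ->
  ex_series a /\ Series a <= B.
Proof.
  intros Hp Hb.
  destruct (ex_finite_lim_seq_incr (sum_n a) B (sum_n_mono a Hp) Hb) as [l Hl].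
  assert (Hs : is_series a l) by (apply lim_is_series; exact Hl).
  split. exists l; exact Hs.
  rewrite (is_series_unique a l Hs).
  assert (H := is_lim_seq_le (sum_n a) (fun _ => B) l B Hb Hl (is_lim_seq_const B)).
  exact H.
Qed.

Lemma series_ge_sum (a : nat -> R) N : (forall n, 0 <= a n) -> ex_series a -> sum_n a N <= Series a.
Proof.
  intros Hp [l Hl].
  rewrite (is_series_unique a l Hl).
  assert (H := is_lim_seq_le_loc (fun _ => sum_n a N) (sum_n a) (sum_n a N) l).
  apply H. exists N. intros n Hn. induction Hn. lra.
  pose proof (sum_n_mono a Hp m). lra.
  apply is_lim_seq_const. exact Hl.
Qed.

Lemma sum_n_ge0 (a : nat -> R) : (forall n, 0 <= a n) -> forall N, 0 <= sum_n a N.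
Proof. intros Hp N. induction N. rewrite sum_O. apply Hp. rewrite sum_Sn. unfold plus; simpl. specialize (Hp (S N)). lra. Qed.

Lemma sum_n_ge1 (a : nat -> R) i : (forall n, 0 <= a n) -> a i <= sum_n a i.
Proof. intros Hp. destruct i. rewrite sum_O; lra. rewrite sum_Sn. unfold plus; simpl.
  pose proof (sum_n_ge0 a Hp i). lra. Qed.

Lemma sum_n_ge2 (a : nat -> R) i j : (forall n, 0 <= a n) -> (i < j)%nat -> a i + a j <= sum_n a j.
Proof. intros Hp Hij. destruct j. lia. rewrite sum_Sn. unfold plus; simpl.
  assert (forall m, (i <= m)%nat -> a i <= sum_n a m).
  { intros m Hm; induction Hm. apply sum_n_ge1; auto. rewrite sum_Sn; unfold plus; simpl.
    specialize (Hp (S m)). lra. }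
  specialize (H j ltac:(lia)). lra. Qed.

Lemma series_ge1 (a : nat -> R) i : (forall n, 0 <= a n) -> ex_series a -> a i <= Series a.
Proof. intros. eapply Rle_trans. apply sum_n_ge1; auto. apply series_ge_sum; auto. Qed.

Lemma series_ge0 (a : nat -> R) : (forall n, 0 <= a n) -> ex_series a -> 0 <= Series a.
Proof. intros. eapply Rle_trans. apply (H 0%nat). apply series_ge1; auto. Qed.

Lemma series_ge2 (a : nat -> R) i j : (forall n, 0 <= a n) -> ex_series a -> i <> j -> a i + a j <= Series a.
Proof. intros Hp He Hij. destruct (Nat.lt_ge_cases i j).
  eapply Rle_trans. apply sum_n_ge2; eauto. apply series_ge_sum; auto.
  eapply Rle_trans. rewrite Rplus_comm. apply (sum_n_ge2 a j i); auto; lia. apply series_ge_sum; auto. Qed.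

Definition pos_part (h : Z -> R) := fun m : nat => h (Z.of_nat m).
Definition neg_part (h : Z -> R) := fun m : nat => h (- (Z.of_nat m + 1))%Z.
Definition ZS (h : Z -> R) := Series (pos_part h) + Series (neg_part h).
Definition Zsum (h : Z -> R) := ex_series (pos_part h) /\ ex_series (neg_part h).

Lemma ZS_ge1 h k : (forall k, 0 <= h k) -> Zsum h -> h k <= ZS h.
Proof. intros Hp [H1 H2]. unfold ZS.
  assert (0 <= Series (pos_part h)) by (apply series_ge0; auto; intro; apply Hp).
  assert (0 <= Series (neg_part h)) by (apply series_ge0; auto; intro; apply Hp).
  destruct (Z_le_gt_dec 0 k).
  - pose proof (series_ge1 (pos_part h) (Z.to_nat k) (fun n => Hp _) H1). unfold pos_part in H3 at 1.
    rewrite Z2Nat.id in H3 by lia. lra.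
  - pose proof (series_ge1 (neg_part h) (Z.to_nat (- k - 1)) (fun n => Hp _) H2). unfold neg_part in H3 at 1.
    rewrite Z2Nat.id in H3 by lia. replace (- (- k - 1 + 1))%Z with k in H3 by lia. lra.
Qed.

Lemma ZS_ge2 h k k' : (forall k, 0 <= h k) -> Zsum h -> k <> k' -> h k + h k' <= ZS h.
Proof. intros Hp [H1 H2] Hk. unfold ZS.
  assert (0 <= Series (pos_part h)) by (apply series_ge0; auto; intro; apply Hp).
  assert (0 <= Series (neg_part h)) by (apply series_ge0; auto; intro; apply Hp).
  assert (P1 : forall k, (0 <= k)%Z -> h k <= Series (pos_part h)).
  { intros j Hj. pose proof (series_ge1 (pos_part h) (Z.to_nat j) (fun n => Hp _) H1). unfold pos_part in H3 at 1.
    rewrite Z2Nat.id in H3 by lia. lra. }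
  assert (N1 : forall k, (k < 0)%Z -> h k <= Series (neg_part h)).
  { intros j Hj. pose proof (series_ge1 (neg_part h) (Z.to_nat (- j - 1)) (fun n => Hp _) H2). unfold neg_part in H3 at 1.
    rewrite Z2Nat.id in H3 by lia. replace (- (- j - 1 + 1))%Z with j in H3 by lia. lra. }
  destruct (Z_le_gt_dec 0 k); destruct (Z_le_gt_dec 0 k').
  - pose proof (series_ge2 (pos_part h) (Z.to_nat k) (Z.to_nat k') (fun n => Hp _) H1 ltac:(lia)).
    unfold pos_part in H3 at 1 2. rewrite !Z2Nat.id in H3 by lia. lra.
  - pose proof (P1 k ltac:(lia)); pose proof (N1 k' ltac:(lia)); lra.
  - pose proof (P1 k' ltac:(lia)); pose proof (N1 k ltac:(lia)); lra.
  - pose proof (series_ge2 (neg_part h) (Z.to_nat (-k-1)) (Z.to_nat (-k'-1)) (fun n => Hp _) H2 ltac:(lia)).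
    unfold neg_part in H3 at 1 2. rewrite !Z2Nat.id in H3 by lia.
    replace (- (- k - 1 + 1))%Z with k in H3 by lia.
    replace (- (- k' - 1 + 1))%Z with k' in H3 by lia. lra.
Qed.

Lemma Zsum_le h g : (forall k, 0 <= h k <= g k) -> Zsum g -> Zsum h.
Proof. intros H [H1 H2]. split.
  apply (ex_series_le (pos_part h) (pos_part g)); auto; intro n; unfold pos_part;
  rewrite Rabs_pos_eq; apply H.
  apply (ex_series_le (neg_part h) (neg_part g)); auto; intro n; unfold neg_part;
  rewrite Rabs_pos_eq; apply H. Qed.

Lemma ZS_minus h g : Zsum h -> Zsum g -> ZS (fun k => h k - g k) = ZS h - ZS g.
Proof. intros [H1 H2] [G1 G2]. unfold ZS.
  change (pos_part (fun k => h k - g k)) with (fun n => pos_part h n - pos_part g n).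
  change (neg_part (fun k => h k - g k)) with (fun n => neg_part h n - neg_part g n).
  rewrite (Series_minus _ _ H1 G1), (Series_minus _ _ H2 G2). lra. Qed.

Lemma w_pos x : 0 < w x.
Proof. unfold w. pose proof (atan_increasing x (x+1) ltac:(lra)). pose proof PI_RGT_0.
  apply Rdiv_lt_0_compat; lra. Qed.

Lemma w_mvt x : exists c, x < c < x + 1 /\ w x = / (1 + c ^ 2) / PI.
Proof. destruct (MVT_cor2 atan (fun c => / (1 + c ^ 2)) x (x+1) ltac:(lra)) as [c [Hc1 Hc2]].
  intros; apply derivable_pt_lim_atan.
  exists c; split; auto. unfold w. rewrite Hc1. assert (0 < 1 + c^2) by nra. pose proof PI_RGT_0.
  field. lra. Qed.

Lemma w_lower x : / (3 * PI * (1 + x^2)) <= w x.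
Proof. destruct (w_mvt x) as [c [Hc ->]]. pose proof PI_RGT_0.
  assert (0 < 1 + c^2) by nra. assert (0 < 1 + x^2) by nra.
  assert ((c-x)^2 < 1) by nra. assert (0 <= (x - (c - x))^2) by apply pow2_ge_0.
  assert (1 + c^2 <= 3 * (1 + x^2)) by nra.
  replace (/ (1 + c ^ 2) / PI) with (/ (PI * (1 + c^2))) by (field; lra).
  apply Rinv_le_contravar. nra. nra. Qed.

Lemma w_upper x : w x <= 3 / (PI * (1 + x^2)).
Proof. destruct (w_mvt x) as [c [Hc ->]]. pose proof PI_RGT_0.
  assert (0 < 1 + c^2) by nra. assert (0 < 1 + x^2) by nra.
  assert ((c-x)^2 < 1) by nra. assert (0 <= (c + (c - x))^2) by apply pow2_ge_0.
  assert (1 + x^2 <= 3 * (1 + c^2)) by nra.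
  replace (/ (1 + c ^ 2) / PI) with (/ (PI * (1 + c^2))) by (field; lra).
  replace (3 / (PI * (1 + x ^ 2))) with (/ (PI * (1 + x^2) / 3)) by (field; lra).
  apply Rinv_le_contravar. nra. nra. Qed.

Definition gw (phi : R) (k : Z) := w (IZR k - phi).

Lemma gw_pos phi k : 0 < gw phi k.
Proof. apply w_pos. Qed.

Lemma sum_pos phi N : sum_n (pos_part (gw phi)) N = (atan (INR N + 1 - phi) - atan (- phi)) / PI.
Proof. pose proof PI_RGT_0. induction N.
  - rewrite sum_O. unfold pos_part, gw, w. simpl. replace (0 - phi + 1) with (0 + 1 - phi) by ring.
    replace (0 - phi) with (-phi) by ring. reflexivity.
  - rewrite sum_Sn, IHN, S_INR. unfold plus; simpl. unfold pos_part, gw, w.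
    rewrite <- INR_IZR_INZ, S_INR. replace (INR N + 1 - phi + 1) with (INR N + 1 + 1 - phi) by ring.
    field. lra.
Qed.

Lemma sum_neg phi N : sum_n (neg_part (gw phi)) N = (atan (- phi) - atan (- (INR N + 1) - phi)) / PI.
Proof. pose proof PI_RGT_0. induction N.
  - rewrite sum_O. unfold neg_part, gw, w. simpl. replace (-1-phi+1) with (-phi) by ring.
    replace (-1 - phi) with (-(0+1)-phi) by ring. reflexivity.
  - rewrite sum_Sn, IHN, S_INR. unfold plus; simpl. unfold neg_part, gw, w.
    rewrite opp_IZR, plus_IZR, <- INR_IZR_INZ, S_INR.
    replace (- (INR N + 1 + 1) - phi + 1) with (- (INR N + 1) - phi) by ring.
    replace (- (INR N + 1 + 1) - phi) with (- (INR N + 1 + 1) - phi) by ring.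
    field. lra.
Qed.

Lemma gw_Zsum_le1 phi : Zsum (gw phi) /\ ZS (gw phi) <= 1.
Proof. pose proof PI_RGT_0. pose proof (atan_bound (-phi)).
  destruct (series_bounded (pos_part (gw phi)) ((PI/2 - atan (-phi)) / PI)) as [E1 S1].
  intro; apply Rlt_le, gw_pos.
  intro N; rewrite sum_pos. apply Rmult_le_compat_r. apply Rlt_le, Rinv_0_lt_compat; lra.
  pose proof (atan_bound (INR N + 1 - phi)); lra.
  destruct (series_bounded (neg_part (gw phi)) ((atan (-phi) + PI/2) / PI)) as [E2 S2].
  intro; apply Rlt_le, gw_pos.
  intro N; rewrite sum_neg. apply Rmult_le_compat_r. apply Rlt_le, Rinv_0_lt_compat; lra.
  pose proof (atan_bound (- (INR N + 1) - phi)); lra.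
  split. split; auto. unfold ZS.
  replace 1 with ((PI / 2 - atan (- phi)) / PI + (atan (- phi) + PI / 2) / PI) by (field; lra). lra.
Qed.

Lemma tau_bounds : 1.6 < tau < 1.7 /\ tau * tau = tau + 1.
Proof. unfold tau. pose proof (sqrt_pos 5). pose proof (sqrt_sqrt 5 ltac:(lra)).
  assert (2.2 < sqrt 5) by nra. assert (sqrt 5 < 2.4) by nra. split. lra. nra. Qed.

Lemma Int_part_unique r z : IZR z <= r < IZR z + 1 -> Int_part r = z.
Proof. intros [H1 H2]. destruct (base_Int_part r) as [B1 B2].
  assert (IZR z < IZR (Int_part r) + 1) by lra. assert (IZR (Int_part r) < IZR z + 1) by lra.
  rewrite <- plus_IZR in *. apply lt_IZR in H. apply lt_IZR in H0. lia. Qed.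

Lemma modtau_spec x : 0 <= modtau x < tau /\ x = modtau x + tau * IZR (rfloor (x / tau)).
Proof. destruct tau_bounds as [[T1 T2] T3]. unfold modtau, rfloor.
  destruct (base_Int_part (x / tau)) as [B1 B2]. set (z := IZR (Int_part (x / tau))) in *.
  assert (x = tau * (x / tau)) by (field; lra).
  split; [split|]; nra. Qed.

Lemma modtau_unique x y z : 0 <= y < tau -> x = y + tau * IZR z -> modtau x = y.
Proof. destruct tau_bounds as [[T1 T2] T3]. intros Hy Hx. unfold modtau, rfloor.
  rewrite (Int_part_unique (x / tau) z). lra.
  rewrite Hx. split.
  apply (Rmult_le_reg_r tau). lra. replace ((y + tau * IZR z) / tau * tau) with (y + tau * IZR z) by (field; lra). nra.
  apply (Rmult_lt_reg_r tau). lra. replace ((y + tau * IZR z) / tau * tau) with (y + tau * IZR z) by (field; lra). nra.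
Qed.

Lemma descent n : forall d q : Z, (Z.abs d + Z.abs q <= Z.of_nat n)%Z -> (d*d - d*q - q*q = 0)%Z -> d = 0%Z.
Proof. induction n; intros d q Hn Hq. lia.
  pose proof (Z_div_mod_eq_full d 2) as Hd. pose proof (Z_div_mod_eq_full q 2) as Hq'.
  pose proof (Z.mod_pos_bound d 2 ltac:(lia)). pose proof (Z.mod_pos_bound q 2 ltac:(lia)).
  set (a := (d / 2)%Z) in *. set (b := (q / 2)%Z) in *.
  set (e1 := (d mod 2)%Z) in *. set (e2 := (q mod 2)%Z) in *.
  assert (e1 = 0 /\ e2 = 0)%Z.
  { assert (e1 = 0 \/ e1 = 1)%Z by lia. assert (e2 = 0 \/ e2 = 1)%Z by lia.
    rewrite Hd, Hq' in Hq.
    destruct H1 as [-> | ->]; destruct H2 as [-> | ->]; auto; exfalso; nia. }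
  destruct H1 as [E1 E2]. rewrite E1 in Hd. rewrite E2 in Hq'.
  assert (a = 0)%Z.
  { apply (IHn a b). lia. nia. }
  lia.
Qed.

Lemma BA d q : d <> 0%Z -> 0 < IZR d - IZR q * tau < tau -> 1 <= 6 * Rabs (IZR d) * (IZR d - IZR q * tau).
Proof. intros Hd [L1 L2]. destruct tau_bounds as [[T1 T2] T3].
  set (L := IZR d - IZR q * tau) in *.
  assert (HN : (d*d - d*q - q*q <> 0)%Z).
  { intro H. apply Hd. apply (descent (Z.to_nat (Z.abs d + Z.abs q)) d q). lia. exact H. }
  assert (HN' : 1 <= Rabs (IZR (d*d - d*q - q*q))).
  { rewrite <- abs_IZR. apply IZR_le. lia. }
  assert (E : IZR (d*d - d*q - q*q) = L * (2 * IZR d - IZR q - L)).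
  { rewrite minus_IZR, minus_IZR, !mult_IZR. unfold L. 
    replace (IZR q * IZR q) with (IZR q * IZR q * (tau * tau - tau)) by (rewrite T3; ring). ring. }
  rewrite E, Rabs_mult, (Rabs_pos_eq L) in HN' by lra.
  assert (Hd1 : 1 <= Rabs (IZR d)). { rewrite <- abs_IZR. apply IZR_le. lia. }
  assert (Hq : Rabs (IZR q) <= Rabs (IZR d) + 1).
  { assert (IZR q * tau = IZR d - L) by (unfold L; ring).
    destruct (Rcase_abs (IZR q)); destruct (Rcase_abs (IZR d));
    rewrite ?(Rabs_left (IZR q)), ?(Rabs_right (IZR q)), ?(Rabs_left (IZR d)), ?(Rabs_right (IZR d)) in * by lra; nra. }
  assert (HM : Rabs (2 * IZR d - IZR q - L) <= 6 * Rabs (IZR d)).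
  { eapply Rle_trans. apply Rabs_triang. rewrite Rabs_Ropp, (Rabs_pos_eq L) by lra.
    eapply Rle_trans. apply Rplus_le_compat_r. eapply Rle_trans. apply Rabs_triang.
    rewrite Rabs_Ropp, Rabs_mult, (Rabs_pos_eq 2) by lra. apply Rle_refl. lra. }
  nra.
Qed.

Fixpoint fib2 (i : nat) : Z * Z :=
  match i with
  | O => (1%Z, 0%Z)
  | S i => let (f, p) := fib2 i in (2 * f + p, f + p)%Z
  end.

Lemma fib2_spec i : let (f, p) := fib2 i in
  (IZR f - IZR p * tau) * (tau * tau) ^ i = 1 /\ 0 <= IZR p /\ 0 <= IZR f <= (tau * tau) ^ i.
Proof. destruct tau_bounds as [[T1 T2] T3]. induction i.
  - simpl. split; [|split]; lra.
  - change (fib2 (S i)) with (let (f,p) := fib2 i in (2*f+p, f+p)%Z).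
    change ((tau * tau) ^ S i) with (tau * tau * (tau * tau) ^ i).
    destruct (fib2 i) as [f p]. destruct IHi as [H1 [H2 [H3 H4]]].
    rewrite !plus_IZR, mult_IZR.
    assert (P : 0 < (tau * tau) ^ i) by (apply pow_lt; nra).
    assert (Hfp : IZR p * tau <= IZR f).
    { assert (0 < IZR f - IZR p * tau). { apply (Rmult_lt_reg_r ((tau * tau) ^ i)); auto. lra. } lra. }
    split; [|split; [lra|split]].
    + replace ((2 * IZR f + IZR p - (IZR f + IZR p) * tau)) with ((IZR f - IZR p * tau) * (2 - tau)) by
        (assert (IZR p * (tau*tau) = IZR p * (tau + 1)) by (rewrite T3; ring); nra).
      replace ((IZR f - IZR p * tau) * (2 - tau) * (tau * tau * (tau * tau) ^ i)) with
        ((IZR f - IZR p * tau) * (tau * tau) ^ i * ((2 - tau) * (tau * tau))) by ring.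
      rewrite H1. replace ((2 - tau) * (tau * tau)) with (2 * (tau*tau) - tau * (tau * tau)) by ring.
      rewrite T3. replace (tau * (tau + 1)) with (tau * tau + tau) by ring. rewrite T3. ring.
    + lra.
    + assert (2 * IZR f + IZR p <= tau * tau * IZR f).
      { rewrite T3. assert (IZR p * tau * (tau - 1) = IZR p) by (replace (IZR p * tau * (tau - 1)) with (IZR p * (tau * tau - tau)) by ring; rewrite T3; ring).
        nra. }
      nra.
Qed.

Lemma fib_step n : forall L, 0 < L <= tau -> 1 < L * (tau * tau) ^ n ->
  exists f p : Z, 0 < IZR f - IZR p * tau < L /\ 0 <= IZR f <= tau * tau / L.
Proof. destruct tau_bounds as [[T1 T2] T3]. induction n; intros L HL Hn.
  - exists 1%Z, 0%Z. simpl in Hn. split. lra. split. lra.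
    apply (Rmult_le_reg_r L). lra. replace (tau * tau / L * L) with (tau * tau) by (field; lra). nra.
  - destruct (Rlt_le_dec 1 (L * (tau * tau) ^ n)) as [H | H]. now apply IHn.
    pose proof (fib2_spec (S n)). destruct (fib2 (S n)) as [f p]. destruct H0 as [H1 [H2 [H3 H4]]].
    exists f, p. simpl in *.
    assert (P : 0 < (tau * tau) ^ n) by (apply pow_lt; nra).
    assert (P' : 0 < tau * tau * (tau * tau) ^ n) by nra.
    split. split.
    + apply (Rmult_lt_reg_r (tau * tau * (tau * tau) ^ n)); auto. lra.
    + apply (Rmult_lt_reg_r (tau * tau * (tau * tau) ^ n)); auto. lra.
    + split. lra. apply (Rmult_le_reg_r L). lra. replace (tau * tau / L * L) with (tau * tau) by (field; lra). nra.
Qed.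

Lemma pow_big n : 1 + INR n <= (tau * tau) ^ n.
Proof. destruct tau_bounds as [[T1 T2] T3]. induction n. simpl; lra. rewrite S_INR. simpl. set (X := (tau*tau)^n) in *. assert (tau*tau*X = (tau+1)*X) by (rewrite T3; ring). pose proof (pos_INR n). nra. Qed.

Lemma fib_find d q : d <> 0%Z -> 0 < IZR d - IZR q * tau < tau ->
  exists f p : Z, 0 < IZR f - IZR p * tau < IZR d - IZR q * tau /\ 0 <= IZR f <= 18 * Rabs (IZR d).
Proof. intros Hd HL. pose proof (BA d q Hd HL). destruct tau_bounds as [[T1 T2] T3].
  set (L := IZR d - IZR q * tau) in *.
  set (n := Z.to_nat (6 * Z.abs d)).
  assert (Hn : INR n = 6 * Rabs (IZR d)).
  { unfold n. rewrite INR_IZR_INZ, Z2Nat.id by lia. rewrite mult_IZR, abs_IZR. reflexivity. }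
  destruct (fib_step n L ltac:(lra)) as [f [p [F1 [F2 F3]]]].
  pose proof (pow_big n). nra.
  exists f, p. split. auto. split. auto. eapply Rle_trans. apply F3.
  apply (Rmult_le_reg_r L). lra. replace (tau * tau / L * L) with (tau * tau) by (field; lra). nra.
Qed.

Definition c0 : R := / 13689.

Lemma wbound1 y2 y : Rabs y <= 39 * Rabs y2 -> c0 * w y2 <= w y.
Proof. intros H0. pose proof PI_RGT_0.
  assert (y^2 <= 1521 * y2^2).
  { rewrite <- (pow2_abs y), <- (pow2_abs y2). pose proof (Rabs_pos y). nra. }
  pose proof (w_lower y). pose proof (w_upper y2).
  assert (0 < 1 + y^2) by nra. assert (0 < 1 + y2^2) by nra.
  assert (c0 * (3 / (PI * (1 + y2 ^ 2))) <= / (3 * PI * (1 + y ^ 2))).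
  { unfold c0. replace (/ 13689 * (3 / (PI * (1 + y2 ^ 2)))) with (/ (3 * PI * (1521 * (1 + y2^2)))) by (field; lra).
    apply Rinv_le_contravar. nra. nra. }
  assert (0 < c0) by (unfold c0; lra).
  nra.
Qed.

Lemma wbound y1 y2 y : Rabs (y - y1) <= 19 * Rabs (y2 - y1) -> c0 * Rmin (w y1) (w y2) <= w y.
Proof. intros H. assert (0 < c0) by (unfold c0; lra).
  assert (Rabs y <= 20 * Rabs y1 + 19 * Rabs y2).
  { pose proof (Rabs_triang (y - y1) y1). replace (y - y1 + y1) with y in H1 by ring.
    pose proof (Rabs_triang y2 (- y1)). rewrite Rabs_Ropp in H2.
    replace (y2 + - y1) with (y2 - y1) in H2 by ring. lra. }
  destruct (Rle_dec (Rabs y1) (Rabs y2)).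
  - pose proof (wbound1 y2 y ltac:(lra)). pose proof (Rmin_r (w y1) (w y2)). nra.
  - pose proof (wbound1 y1 y ltac:(lra)). pose proof (Rmin_l (w y1) (w y2)). nra.
Qed.

Lemma a_term_bounds n phi k : 0 <= a_term n phi k <= gw phi k.
Proof. unfold a_term, gw. pose proof (w_pos (IZR k - phi)). destruct Rlt_dec; lra. Qed.

Lemma Zsum_a n phi : Zsum (a_term n phi).
Proof. apply (Zsum_le _ (gw phi)). apply a_term_bounds. apply gw_Zsum_le1. Qed.

Lemma core phi n1 n2 : modtau (IZR n1) < modtau (IZR n2) ->
  exists G, c0 * Rmin (arc_len n1 phi) (arc_len n2 phi) <= G /\
    G <= a_coef n2 phi - a_coef n1 phi - arc_len n1 phi /\
    a_coef n2 phi + arc_len n2 phi - a_coef n1 phi <= 1 - G.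
Proof. intro Hr. destruct tau_bounds as [[T1 T2] T3].
  set (r1 := modtau (IZR n1)) in *. set (r2 := modtau (IZR n2)) in *.
  destruct (modtau_spec (IZR n1)) as [R1 E1]. destruct (modtau_spec (IZR n2)) as [R2 E2].
  fold r1 in R1, E1. fold r2 in R2, E2.
  set (z1 := rfloor (IZR n1 / tau)) in *. set (z2 := rfloor (IZR n2 / tau)) in *.
  set (d := (n2 - n1)%Z). set (q := (z2 - z1)%Z).
  assert (Hd : d <> 0%Z). { intro H. assert (n1 = n2) by (unfold d in H; lia). subst r1 r2. rewrite H0 in Hr. lra. }
  assert (HL : IZR d - IZR q * tau = r2 - r1). { unfold d, q. rewrite !minus_IZR. lra. }
  destruct (fib_find d q Hd ltac:(lra)) as [f [p [F1 F2]]]. rewrite HL in F1.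
  assert (HL' : 0 < IZR (- d) - IZR (- (q + 1)) * tau < tau).
  { rewrite !opp_IZR, plus_IZR. lra. }
  destruct (fib_find (-d) (-(q+1)) ltac:(lia) HL') as [f' [p' [F1' F2']]].
  rewrite !opp_IZR, plus_IZR in F1'. rewrite opp_IZR, Rabs_Ropp in F2'.
  set (e := IZR f - IZR p * tau) in *. set (e' := IZR f' - IZR p' * tau) in *.
  assert (F1'' : 0 < e' < tau - (r2 - r1)) by lra.
  clear F1' HL'.
  set (k0 := (n1 + f)%Z). set (k1 := (n2 + f')%Z).
  assert (Hk0 : modtau (IZR k0) = r1 + e).
  { apply (modtau_unique _ _ (z1 + p)). lra. unfold k0, e. rewrite !plus_IZR. lra. }
  assert (Hk1 : r2 < modtau (IZR k1) \/ modtau (IZR k1) < r1).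
  { destruct (Rlt_dec (r2 + e') tau).
    - left. rewrite (modtau_unique _ (r2 + e') (z2 + p')). lra. lra. unfold k1, e'. rewrite !plus_IZR. lra.
    - right. rewrite (modtau_unique _ (r2 + e' - tau) (z2 + p' + 1)). lra. lra. unfold k1, e'. rewrite !plus_IZR. lra. }
  assert (W0 : c0 * Rmin (arc_len n1 phi) (arc_len n2 phi) <= gw phi k0).
  { apply wbound. replace (IZR k0 - phi - (IZR n1 - phi)) with (IZR f) by (unfold k0; rewrite plus_IZR; ring).
    replace (IZR n2 - phi - (IZR n1 - phi)) with (IZR d) by (unfold d; rewrite minus_IZR; ring).
    rewrite Rabs_pos_eq by lra. pose proof (Rabs_pos (IZR d)). lra. }
  assert (W1 : c0 * Rmin (arc_len n1 phi) (arc_len n2 phi) <= gw phi k1).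
  { apply wbound. replace (IZR k1 - phi - (IZR n1 - phi)) with (IZR d + IZR f') by (unfold k1, d; rewrite plus_IZR, minus_IZR; ring).
    replace (IZR n2 - phi - (IZR n1 - phi)) with (IZR d) by (unfold d; rewrite minus_IZR; ring).
    pose proof (Rabs_triang (IZR d) (IZR f')). rewrite (Rabs_pos_eq (IZR f')) in H by lra. lra. }
  set (D := fun k => a_term n2 phi k - a_term n1 phi k).
  assert (HD : forall k, 0 <= D k <= gw phi k).
  { intro k. unfold D, a_term, gw. pose proof (w_pos (IZR k - phi)). fold r1 r2.
    destruct (Rlt_dec (modtau (IZR k)) r2); destruct (Rlt_dec (modtau (IZR k)) r1); lra. }
  destruct (gw_Zsum_le1 phi) as [Zg Sg].
  assert (ZD : Zsum D) by (apply (Zsum_le _ (gw phi)); auto).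
  assert (SD : ZS D = a_coef n2 phi - a_coef n1 phi) by (apply ZS_minus; apply Zsum_a).
  assert (Dn1 : D n1 = gw phi n1).
  { unfold D, a_term, gw. fold r1 r2. destruct (Rlt_dec r1 r2); destruct (Rlt_dec r1 r1); lra. }
  assert (Dk0 : D k0 = gw phi k0).
  { unfold D, a_term, gw. fold r1 r2. rewrite Hk0. destruct (Rlt_dec (r1 + e) r2); destruct (Rlt_dec (r1 + e) r1); lra. }
  assert (Dn2 : D n2 = 0).
  { unfold D, a_term, gw. fold r1 r2. destruct (Rlt_dec r2 r2); destruct (Rlt_dec r2 r1); lra. }
  assert (Dk1 : D k1 = 0).
  { unfold D, a_term, gw. fold r1 r2. destruct (Rlt_dec (modtau (IZR k1)) r2); destruct (Rlt_dec (modtau (IZR k1)) r1); lra. }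
  assert (k0 <> n1). { intro Hx. rewrite Hx in Hk0. fold r1 in Hk0. lra. }
  assert (k1 <> n2). { intro Hx. rewrite Hx in Hk1. fold r2 in Hk1. lra. }
  pose proof (ZS_ge2 D n1 k0 (fun k => proj1 (HD k)) ZD ltac:(auto)).
  set (Ef := fun k => gw phi k - D k).
  assert (HE : forall k, 0 <= Ef k <= gw phi k) by (intro k; unfold Ef; pose proof (HD k); pose proof (gw_pos phi k); lra).
  assert (ZE : Zsum Ef) by (apply (Zsum_le _ (gw phi)); auto).
  assert (SE : ZS Ef = ZS (gw phi) - ZS D) by (apply ZS_minus; auto).
  pose proof (ZS_ge2 Ef n2 k1 (fun k => proj1 (HE k)) ZE ltac:(auto)).
  unfold Ef in H2 at 1 2. rewrite Dn2, Dk1 in H2.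
  rewrite Dn1, Dk0 in H1.
  exists (Rmin (gw phi k0) (gw phi k1)). unfold arc_len in *. fold (gw phi n1) (gw phi n2) in *.
  pose proof (Rmin_l (gw phi k0) (gw phi k1)). pose proof (Rmin_r (gw phi k0) (gw phi k1)).
  split. apply Rmin_glb; auto. split; lra.
Qed.

Lemma mod_neq n1 n2 : n1 <> n2 -> modtau (IZR n1) <> modtau (IZR n2).
Proof. intros Hn Heq. destruct tau_bounds as [[T1 T2] T3].
  destruct (modtau_spec (IZR n1)) as [R1 E1]. destruct (modtau_spec (IZR n2)) as [R2 E2].
  set (z1 := rfloor (IZR n1 / tau)) in *. set (z2 := rfloor (IZR n2 / tau)) in *.
  set (d := (n2 - n1)%Z). set (q := (z2 - z1)%Z).
  assert (HL : IZR d = IZR q * tau). { unfold d, q. rewrite !minus_IZR. lra. }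
  assert (IZR (d*d - d*q - q*q) = 0).
  { rewrite !minus_IZR, !mult_IZR, HL. replace (IZR q * tau * (IZR q * tau)) with (IZR q * IZR q * (tau * tau)) by ring.
    rewrite T3. ring. }
  apply eq_IZR in H. apply Hn. pose proof (descent (Z.to_nat (Z.abs d + Z.abs q)) d q ltac:(lia) H). unfold d in H0. lia.
Qed.

Lemma frac_eq v m : 0 <= v < 1 -> frac_part (v + IZR m) = v.
Proof. intros H. unfold frac_part, rfloor. rewrite (Int_part_unique _ m). ring. lra. Qed.

Lemma circ_lb x y v m G : x - y = v + IZR m -> G <= v -> v <= 1 - G -> 0 < G -> G <= circ_dist x y.
Proof. intros H H1 H2 H3. unfold circ_dist. rewrite H, frac_eq by lra. apply Rmin_glb; lra. Qed.

Lemma gap phi n1 n2 : n1 <> n2 -> exists G, c0 * Rmin (arc_len n1 phi) (arc_len n2 phi) <= G /\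
  forall x y, in_I n1 phi x -> in_I n2 phi y -> G <= circ_dist x y.
Proof. intros Hn. assert (Hc : 0 < c0) by (unfold c0; lra).
  assert (HM : 0 < Rmin (arc_len n1 phi) (arc_len n2 phi)) by (apply Rmin_glb_lt; apply w_pos).
  destruct (Rtotal_order (modtau (IZR n1)) (modtau (IZR n2))) as [Hlt | [Heq | Hgt]].
  - destruct (core phi n1 n2 Hlt) as [G [G1 [G2 G3]]]. exists G. split; auto. assert (0 < G) by nra.
    intros x y [t1 [T1 [m1 X]]] [t2 [T2 [m2 Y]]].
    apply (circ_lb x y (1 - (t2 - t1)) (m1 - m2 - 1)); try lra.
    rewrite X, Y, !minus_IZR. ring.
  - exfalso. exact (mod_neq n1 n2 Hn Heq).
  - destruct (core phi n2 n1 Hgt) as [G [G1 [G2 G3]]]. exists G. rewrite Rmin_comm. split; auto. assert (0 < G) by (rewrite Rmin_comm in HM; nra).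
    intros x y [t1 [T1 [m1 X]]] [t2 [T2 [m2 Y]]].
    apply (circ_lb x y (t1 - t2) (m1 - m2)); try lra.
    rewrite X, Y, !minus_IZR. ring.
Qed.

Theorem corollary16 :
  exists C : R, 0 < C /\
    forall (phi : R) (n1 n2 : Z), n1 <> n2 ->
      Rbar_lt (Finite (C * Rmin (arc_len n1 phi) (arc_len n2 phi)))
              (set_dist (in_I n1 phi) (in_I n2 phi)).
Proof. assert (Hc : 0 < c0) by (unfold c0; lra).
  exists (c0 / 2). split. lra. intros phi n1 n2 Hn.
  assert (HM : 0 < Rmin (arc_len n1 phi) (arc_len n2 phi)) by (apply Rmin_glb_lt; apply w_pos).
  destruct (gap phi n1 n2 Hn) as [G [G1 G2]].
  unfold set_dist.
  destruct (Glb_Rbar_correct (fun d => exists x y, in_I n1 phi x /\ in_I n2 phi y /\ d = circ_dist x y)) as [_ Hglb].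
  assert (Hle : Rbar_le (Finite G) (Glb_Rbar (fun d => exists x y, in_I n1 phi x /\ in_I n2 phi y /\ d = circ_dist x y))).
  { apply Hglb. intros d [x [y [Hx [Hy ->]]]]. simpl. apply G2; auto. }
  destruct (Glb_Rbar _) as [r | |]; simpl in *; auto.
  - assert (c0 / 2 * Rmin (arc_len n1 phi) (arc_len n2 phi) < c0 * Rmin (arc_len n1 phi) (arc_len n2 phi)) by nra.
    lra.
Qed.
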